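(* Let $\Phi:\mathbb{R}^2\to\mathbb{R}$, $\Phi(x)=W^{(1)}\mathrm{ReLU}(W^{(0)}x+b^{(0)})+b^{(1)}$, be a random shallow ReLU network of width $N=3$, where $W^{(0)}\in\mathbb{R}^{3\times 2}$ has i.i.d. $\mathcal{N}(0,2/3)$ entries, $W^{(1)}\in\mathbb{R}^{1\times 3}$ has i.i.d. $\mathcal{N}(0,1)$ entries, $b^{(0)}_i\sim\mathcal{D}^{(0)}_i$, $b^{(1)}\sim\mathcal{D}^{(1)}_1$ for arbitrary probability distributions on $\mathbb{R}$, all jointly independent. Let $\widetilde{\Phi}(x)=W^{(1)}(W^{(0)}x+b^{(0)})+b^{(1)}$ and let $C>0$ be arbitrary. Then with positive probability $\mathrm{Lip}(\Phi)>C\cdot\mathrm{Lip}(\widetilde{\Phi})$.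
   Context: $\mathrm{ReLU}(t)=\max\{0,t\}$ componentwise; $\mathrm{Lip}(f)=\sup_{x\neq y}|f(x)-f(y)|/\|x-y\|_2$. *)

(* Defs.v *)
From HB Require Import structures.
From mathcomp Require Import all_boot all_order all_algebra.
From mathcomp Require Import all_classical all_reals all_analysis.
Set Implicit Arguments. Unset Strict Implicit. Unset Printing Implicit Defensive.
Import Order.TTheory GRing.Theory Num.Theory.
Local Open Scope classical_set_scope.
Local Open Scope ring_scope.

Section Defs.
Context {R : realType}.

Definition relu (t : R) : R := Num.max 0 t.

Definition norm2 (x : 'I_2 -> R) : R := Num.sqrt (\sum_(j < 2) x j ^+ 2).

Definition Lip (f : ('I_2 -> R) -> R) : \bar R :=
  ereal_sup [set r : \bar R | exists x y : 'I_2 -> R, x <> y /\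
     r = (`|f x - f y| / norm2 (fun j => x j - y j))%:E].

Definition shallow_relu (W0 : 'I_3 -> 'I_2 -> R) (W1 : 'I_3 -> R)
    (b0 : 'I_3 -> R) (b1 : R) (x : 'I_2 -> R) : R :=
  \sum_(i < 3) W1 i * relu (\sum_(j < 2) W0 i j * x j + b0 i) + b1.

Definition shallow_lin (W0 : 'I_3 -> 'I_2 -> R) (W1 : 'I_3 -> R)
    (b0 : 'I_3 -> R) (b1 : R) (x : 'I_2 -> R) : R :=
  \sum_(i < 3) W1 i * (\sum_(j < 2) W0 i j * x j + b0 i) + b1.

End Defs.

(* Mutual independence of a finite family of real random variables:
   the product rule for preimages of arbitrary Borel sets (taking
   A i = setT recovers every subfamily). *)
Definition mutually_independent {R : realType} {d : measure_display}
    {T : measurableType d} (P : probability T R) (I : finType)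
    (X : I -> T -> R) : Prop :=
  forall A : I -> set R, (forall i, measurable (A i)) ->
    P (\bigcap_(i in [set: I]) (X i @^-1` A i)) =
    (\prod_(i : I) P (X i @^-1` A i))%E.

(* Index type of the 3*2 + 3 + 3 + 1 = 13 scalar parameters. *)
Definition param_index : finType := (((('I_3 * 'I_2) + 'I_3) + 'I_3) + unit)%type.

Definition param_family {T R : Type} (W0 : 'I_3 -> 'I_2 -> T -> R)
    (W1 : 'I_3 -> T -> R) (b0 : 'I_3 -> T -> R) (b1 : T -> R)
    (k : param_index) : T -> R :=
  match k with
  | inl (inl (inl (i, j))) => W0 i j
  | inl (inl (inr i)) => W1 i
  | inl (inr i) => b0 i
  | inr _ => b1
  end.

(* Main.v *)
Require Import Defs.
From HB Require Import structures.
From mathcomp Require Import all_boot all_order all_algebra.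
From mathcomp Require Import all_classical all_reals all_analysis.
From mathcomp Require Import ring lra.
Import Order.TTheory GRing.Theory Num.Theory.
Local Open Scope classical_set_scope.
Local Open Scope ring_scope.

Section Det.
Variable R : realType.

Definition i0 : 'I_3 := @Ordinal 3 0 isT.
Definition i1 : 'I_3 := @Ordinal 3 1 isT.
Definition i2 : 'I_3 := @Ordinal 3 2 isT.
Definition j0 : 'I_2 := @Ordinal 2 0 isT.
Definition j1 : 'I_2 := @Ordinal 2 1 isT.

Lemma sum3 (F : 'I_3 -> R) : \sum_(i < 3) F i = F i0 + F i1 + F i2.
Proof.
rewrite !big_ord_recr big_ord0 /= add0r.
by congr (F _ + F _ + F _); apply: val_inj.
Qed.

Lemma sum2 (F : 'I_2 -> R) : \sum_(i < 2) F i = F j0 + F j1.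
Proof.
rewrite !big_ord_recr big_ord0 /= add0r.
by congr (F _ + F _); apply: val_inj.
Qed.

Lemma relu_pos (a : R) : 0 <= a -> relu a = a.
Proof. by move=> h; rewrite /relu max_r. Qed.

Lemma relu_neg (a : R) : a <= 0 -> relu a = 0.
Proof. by move=> h; rewrite /relu max_l. Qed.

Lemma Lip_ge (f : ('I_2 -> R) -> R) x y : x <> y ->
  ((`|f x - f y| / norm2 (fun j => x j - y j))%:E <= Lip f)%E.
Proof. by move=> hxy; apply: ereal_sup_ubound; exists x, y. Qed.

Definition vv (w0 : 'I_3 -> 'I_2 -> R) (w1 : 'I_3 -> R) j :=
  \sum_(i < 3) w1 i * w0 i j.

Lemma Lip_lin_le w0 w1 b0 b1 :
  (Lip (shallow_lin w0 w1 b0 b1) <= (`|vv w0 w1 j0| + `|vv w0 w1 j1|)%:E)%E.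
Proof.
apply: ge_ereal_sup => r [x [y [_ ->]]].
rewrite lee_fin.
set n := norm2 _.
have n0 : 0 <= n by rewrite /n /norm2 sqrtr_ge0.
set K := `|vv w0 w1 j0| + `|vv w0 w1 j1|.
have K0 : 0 <= K by rewrite /K addr_ge0.
have [->|nn0] := eqVneq n 0; first by rewrite invr0 mulr0.
have np : 0 < n by rewrite lt_neqAle eq_sym nn0 n0.
rewrite ler_pdivrMr //.
have hd : forall j, `|x j - y j| <= n.
  move=> j; rewrite /n /norm2 sum2 -sqrtr_sqr ler_sqrt ?addr_ge0 ?sqr_ge0 //.
  have : j = j0 \/ j = j1.
    case: j => [[|[|k]] hk]; [left|right|by []]; exact: val_inj.
  by case=> ->; rewrite ?lerDl ?lerDr sqr_ge0.
have -> : shallow_lin w0 w1 b0 b1 x - shallow_lin w0 w1 b0 b1 y =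
   vv w0 w1 j0 * (x j0 - y j0) + vv w0 w1 j1 * (x j1 - y j1).
  rewrite /shallow_lin /vv !sum3 !sum2; ring.
have h0 := hd j0; have h1 := hd j1.
rewrite /K.
apply: (le_trans (ler_normD _ _)); rewrite !normrM mulrDl.
by apply: lerD; apply: ler_wpM2l.
Qed.


Definition tW0 (i : 'I_3) (j : 'I_2) : R :=
  if val j == 0%N then (if val i == 0%N then 1 else -(1/2))
  else (if val i == 0%N then 0 else if val i == 1%N then 1 else -1).

Lemma det (C eps : R) w0 w1 b0 b1 : 0 < C -> 0 < eps -> eps <= 1/100 ->
  C * (18 * eps) < 1/4 ->
  (forall i j, tW0 i j - eps < w0 i j < tW0 i j + eps) ->
  (forall i, 1 - eps < w1 i < 1 + eps) ->
  (C%:E * Lip (shallow_lin w0 w1 b0 b1) < Lip (shallow_relu w0 w1 b0 b1))%E.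
Proof.
move=> C0 e0 e1 Ce H H1.
have /andP[a00l a00u] := H i0 j0; have /andP[a01l a01u] := H i0 j1.
have /andP[a10l a10u] := H i1 j0; have /andP[a11l a11u] := H i1 j1.
have /andP[a20l a20u] := H i2 j0; have /andP[a21l a21u] := H i2 j1.
have /andP[c0l c0u] := H1 i0; have /andP[c1l c1u] := H1 i1.
have /andP[c2l c2u] := H1 i2.
rewrite /tW0 /= in a00l a00u a01l a01u a10l a10u a11l a11u a20l a20u a21l a21u.
have hv0 : `|vv w0 w1 j0| <= 9 * eps.
  rewrite ler_norml /vv sum3; apply/andP; split; nra.
have hv1 : `|vv w0 w1 j1| <= 9 * eps.
  rewrite ler_norml /vv sum3; apply/andP; split; nra.
set t : R := 4 * (`|b0 i0| + `|b0 i1| + `|b0 i2|) + 4.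
have n0 := normr_ge0 (b0 i0); have n1 := normr_ge0 (b0 i1).
have n2 := normr_ge0 (b0 i2).
have m0 := ler_norm (b0 i0); have m1 := ler_norm (b0 i1).
have m2 := ler_norm (b0 i2).
have m0' : - b0 i0 <= `|b0 i0| by rewrite -normrN ler_norm.
have m1' : - b0 i1 <= `|b0 i1| by rewrite -normrN ler_norm.
have m2' : - b0 i2 <= `|b0 i2| by rewrite -normrN ler_norm.
have t0 : 0 <= t by rewrite /t; lra.
have tb0 : 4 * `|b0 i0| <= t by rewrite /t; lra.
have tb1 : 4 * `|b0 i1| <= t by rewrite /t; lra.
have tb2 : 4 * `|b0 i2| <= t by rewrite /t; lra.
clearbody t.
pose x : 'I_2 -> R := fun j => if val j == 0%N then t else 0.
pose y : 'I_2 -> R := fun j => if val j == 0%N then t + 1 else 0.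
have xy : x <> y.
  move=> /(congr1 (fun f => f j0)); rewrite /x /y /= => h; lra.
have hn : norm2 (fun j => x j - y j) = 1.
  rewrite /norm2 sum2 /x /y /= (_ : (t - (t + 1)) ^+ 2 + (0 - 0) ^+ 2 = 1) ?sqrtr1 //.
  ring.
have hphi : shallow_relu w0 w1 b0 b1 x - shallow_relu w0 w1 b0 b1 y =
    - (w1 i0 * w0 i0 j0).
  rewrite /shallow_relu !sum3 !sum2 /x /y /=.
  rewrite (relu_pos (w0 i0 j0 * t + w0 i0 j1 * 0 + b0 i0)); last by nra.
  rewrite (relu_pos (w0 i0 j0 * (t + 1) + w0 i0 j1 * 0 + b0 i0)); last by nra.
  rewrite (relu_neg (w0 i1 j0 * t + w0 i1 j1 * 0 + b0 i1)); last by nra.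
  rewrite (relu_neg (w0 i1 j0 * (t + 1) + w0 i1 j1 * 0 + b0 i1)); last by nra.
  rewrite (relu_neg (w0 i2 j0 * t + w0 i2 j1 * 0 + b0 i2)); last by nra.
  rewrite (relu_neg (w0 i2 j0 * (t + 1) + w0 i2 j1 * 0 + b0 i2)); last by nra.
  ring.
apply: (@le_lt_trans _ _ (C * (18 * eps))%:E).
  rewrite EFinM; apply: lee_wpmul2l; first by rewrite lee_fin ltW.
  apply: (le_trans (Lip_lin_le _ _ _ _)); rewrite lee_fin; lra.
apply: (@lt_le_trans _ _ (1/4)%:E); first by rewrite lte_fin.
apply: (le_trans _ (Lip_ge _ _ _ xy)).
rewrite lee_fin hn divr1 hphi normrN ger0_norm; nra.
Qed.

Lemma normal_itv_gt0 (s a b : R) : s != 0 -> a < b ->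
  (0 < normal_prob 0 s [set` `]a, b[])%E.
Proof.
move=> s0 ab.
set M := `|a| + `|b|.
set c := normal_peak s * expR (- (M ^+ 2) / (s ^+ 2 *+ 2)).
have c0 : 0 < c by rewrite mulr_gt0 ?expR_gt0 ?normal_peak_gt0.
apply: (@lt_le_trans _ _
  (\int[lebesgue_measure]_(x in [set` `]a, b[]) (cst c%:E x))%E).
  rewrite integral_cst //= lebesgue_measure_itv /= lte_fin ab -EFinB -EFinM.
  by rewrite lte_fin mulr_gt0 // subr_gt0.
apply: ge0_le_integral => //.
- by move=> x _; rewrite lee_fin ltW.
- apply/measurable_realfun.measurable_EFinP; apply: measurable_funTS.
  exact: measurable_normal_pdf.
move=> x; rewrite /= in_itv /= => /andP[ax xb].
rewrite lee_fin /normal_pdf (negbTE s0).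
apply: ler_wpM2l; first exact: normal_peak_ge0.
rewrite /normal_fun ler_expR subr0 !mulNr lerN2.
apply: ler_wpM2r; first by rewrite invr_ge0 mulrn_wge0 // sqr_ge0.
have := ler_norm a; have := ler_norm b.
have : - a <= `|a| by rewrite -normrN ler_norm.
have : - b <= `|b| by rewrite -normrN ler_norm.
rewrite /M; nra.
Qed.

End Det.

Theorem proposition4p7 (R : realType) (d : measure_display)
  (T : measurableType d) (P : probability T R)
  (W0 : 'I_3 -> 'I_2 -> T -> R) (W1 : 'I_3 -> T -> R)
  (b0 : 'I_3 -> T -> R) (b1 : T -> R)
  (mW0 : forall i j, measurable_fun [set: T] (W0 i j))
  (mW1 : forall i, measurable_fun [set: T] (W1 i))
  (mb0 : forall i, measurable_fun [set: T] (b0 i))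
  (mb1 : measurable_fun [set: T] b1)
  (dW0 : forall i j (A : set R), measurable A ->
     P (W0 i j @^-1` A) = normal_prob 0 (Num.sqrt (2 / 3)) A)
  (dW1 : forall i (A : set R), measurable A ->
     P (W1 i @^-1` A) = normal_prob 0 1 A)
  (indep : mutually_independent P (param_family W0 W1 b0 b1))
  (C : R) (C_gt0 : 0 < C) :
  exists A : set T, [/\ measurable A,
    A `<=` [set w | (C%:E * Lip (shallow_lin (fun i j => W0 i j w)
                       (fun i => W1 i w) (fun i => b0 i w) (b1 w))
                     < Lip (shallow_relu (fun i j => W0 i j w)
                       (fun i => W1 i w) (fun i => b0 i w) (b1 w)))%E]
    & (0 < P A)%E].
Proof.
pose eps : R := 1 / (100 * (C + 1)).
have e0 : 0 < eps by rewrite /eps divr_gt0 // mulr_gt0 // addr_gt0.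
have e1 : eps <= 1 / 100.
  rewrite /eps ler_pdivrMr ?mulr_gt0 ?addr_gt0 //; lra.
have Ce : C * (18 * eps) < 1 / 4.
  rewrite /eps mulrA mulrA mul1r ltr_pdivrMr ?mulr_gt0 ?addr_gt0 //; lra.
pose Iv (k : param_index) : set R :=
  match k with
  | inl (inl (inl (i, j))) => [set` `]tW0 R i j - eps, tW0 R i j + eps[]
  | inl (inl (inr i)) => [set` `]1 - eps, 1 + eps[]
  | _ => setT
  end.
have mIv : forall k, measurable (Iv k).
  by case=> [[[[i j]|i]|i]|[]] /=.
have mX : forall k, measurable_fun setT (param_family W0 W1 b0 b1 k).
  by case=> [[[[i j]|i]|i]|[]] /=.
exists (\bigcap_(k in [set: param_index])
          (param_family W0 W1 b0 b1 k @^-1` Iv k)); split.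
- apply: fin_bigcap_measurable; first exact: finite_finset.
  move=> k _; rewrite -[X in measurable X]setTI; exact: mX.
- move=> w Aw /=.
  apply: (@det R C eps) => //.
  + move=> i j; have := Aw (inl (inl (inl (i, j)))) I.
    by rewrite /= in_itv.
  + move=> i; have := Aw (inl (inl (inr i))) I.
    by rewrite /= in_itv.
- rewrite indep //.
  apply: (big_ind (fun x => 0 < x)%E) => //; first exact: mule_gt0.
  case=> [[[[i j]|i]|i]|[]] _ /=.
  + rewrite dW0 //; apply: normal_itv_gt0; last lra.
    by rewrite gt_eqF // sqrtr_gt0 divr_gt0.
  + by rewrite dW1 //; apply: normal_itv_gt0 => //; lra.
  + by rewrite preimage_setT probability_setT.
  + by rewrite preimage_setT probability_setT.
Qed.
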